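(* Let $n\geq2$, $R_m,k>0$, $0\leq\alpha\leq1$. Let $\Omega\subset\mathbb{R}^n$ be a bounded Lipschitz domain of diameter at most $R_m$ whose complement is connected. Consider a source $\chi_\Omega\varphi$ with $\varphi\in C^\alpha(\overline\Omega)$. If the source is radiationless at wavenumber $k$, then there exists a positive constant $C$, depending only on $k,R_m,n$, such that \[ \big(\operatorname{diam}(\Omega)\big)^\alpha\geq C\,\frac{\sup_{\partial\Omega}|\varphi|}{\|\varphi\|_{C^\alpha(\overline\Omega)}}. \]
   Context: Source scattering: for $f=\chi_\Omega\varphi$ and $k>0$, let $u\in H^2_{loc}(\mathbb{R}^n)$ be the unique solution of $(\Delta+k^2)u=f$ satisfying the Sommerfeld radiation condition $\lim_{r\to\infty}r^{(n-1)/2}(\partial_r-ik)u=0$. Its far-field pattern is $u_\infty(\hat x)=C_{n,k}\int e^{-ik\hat x\cdot y}f(y)\,dy$, $\hat x\in\mathbb{S}^{n-1}$, with $C_{n,k}\neq0$ explicit (the leading coefficient in $u(x)\sim\frac{e^{ik|x|}}{|x|^{(n-1)/2}}u_\infty(x/|x|)$). The source is radiationless if $u_\infty\equiv0$. Standing assumption: bounded domains satisfy $H^2_0(\Omega)=\{u|_\Omega: u\in H^2(\mathbb{R}^n),\ u=0 \text{ in } \mathbb{R}^n\setminus\overline\Omega\}$. *)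

(* Defs.v *)
From HB Require Import structures.
From mathcomp Require Import all_boot all_order all_algebra.
From mathcomp Require Import all_classical all_reals all_analysis.
From mathcomp Require Import complex.
Set Implicit Arguments. Unset Strict Implicit. Unset Printing Implicit Defensive.
Import Order.TTheory GRing.Theory Num.Theory.
Import numFieldNormedType.Exports.
Local Open Scope classical_set_scope.
Local Open Scope ring_scope.

Section Defs.
Variable R : realType.

Definition dotv (n : nat) (x y : 'rV[R]_n) : R := \sum_(i < n) x ord0 i * y ord0 i.
Definition enorm (n : nat) (x : 'rV[R]_n) : R := Num.sqrt (dotv x x).
Definition eball (n : nat) (p : 'rV[R]_n) (r : R) : set 'rV[R]_n :=
  [set x | enorm (x - p) < r].

Definition diam (n : nat) (A : set 'rV[R]_n) : R :=
  sup [set enorm (x - y) | x in A & y in A].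

Definition cabs (z : R[i]) : R := Num.sqrt (complex.Re z ^+ 2 + complex.Im z ^+ 2).

(* Omega is locally (near each boundary point) the subgraph of a Lipschitz
   function over a hyperplane: there are a Euclidean unit vector e (the local
   "vertical" direction, i.e. a rotation of coordinates), a radius r > 0 and a
   Lipschitz function g, constant along e (so g is a function on the
   hyperplane e^perp), such that within the ball B(p,r), x is in Omega iff
   x.e < g(x). *)
Definition lipschitz_boundary (n : nat) (Om : set 'rV[R]_n) : Prop :=
  forall p, closure Om p -> ~ Om p ->
    exists (r L : R) (e : 'rV[R]_n) (g : 'rV[R]_n -> R),
      [/\ 0 < r, 0 <= L, enorm e = 1,
          (forall x y, `|g x - g y| <= L * enorm (x - y)) /\
          (forall x t, g (x + t *: e) = g x) &
          (forall x, eball p r x -> (Om x <-> dotv x e < g x))].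

Definition bounded_lipschitz_domain (n : nat) (Om : set 'rV[R]_n) : Prop :=
  [/\ open Om, connected Om, Om !=set0,
      (exists M : R, forall x, Om x -> enorm x <= M) &
      lipschitz_boundary Om].

Definition sup_abs (n : nat) (A : set 'rV[R]_n) (phi : 'rV[R]_n -> R[i]) : R :=
  sup [set cabs (phi x) | x in A].

Definition holder_quotients (n : nat) (alpha : R) (A : set 'rV[R]_n)
    (phi : 'rV[R]_n -> R[i]) : set R :=
  [set q | exists x y, [/\ A x, A y, x <> y &
            q = cabs (phi x - phi y) / (enorm (x - y)) `^ alpha]].

Definition holder_seminorm (n : nat) (alpha : R) (A : set 'rV[R]_n)
    (phi : 'rV[R]_n -> R[i]) : R :=
  sup (holder_quotients alpha A phi).

Definition holder_norm (n : nat) (alpha : R) (A : set 'rV[R]_n)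
    (phi : 'rV[R]_n -> R[i]) : R :=
  sup_abs A phi + holder_seminorm alpha A phi.

Definition in_holder (n : nat) (alpha : R) (A : set 'rV[R]_n)
    (phi : 'rV[R]_n -> R[i]) : Prop :=
  [/\ (forall x, A x -> forall eps : R, 0 < eps -> exists2 d : R, 0 < d &
          forall y, A y -> enorm (y - x) < d -> cabs (phi y - phi x) < eps),
      has_ubound [set cabs (phi x) | x in A] &
      has_ubound (holder_quotients alpha A phi)].

Definition cons_row (n : nat) (t : R) (v : 'rV[R]_n) : 'rV[R]_n.+1 :=
  \row_(i < n.+1) match unlift ord0 i with Some j => v ord0 j | None => t end.

(* Lebesgue integral over R^n, computed as the iterated one-dimensional
   Lebesgue integral (Fubini). *)
Fixpoint iint (n : nat) : ('rV[R]_n -> R) -> R :=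
  match n with
  | 0 => fun f => f 0
  | m.+1 => fun f =>
      Rintegral (@lebesgue_measure R) setT (fun t => iint (fun v => f (cons_row t v)))
  end.

Definition ciint (n : nat) (f : 'rV[R]_n -> R[i]) : R[i] :=
  ((iint (fun y => complex.Re (f y)))%:C + 'i * (iint (fun y => complex.Im (f y)))%:C)%C.

Definition expi (t : R) : R[i] := ((cos t)%:C + 'i * (sin t)%:C)%C.

Definition Cnk (n : nat) (k : R) : R[i] :=
  (- expi (pi * (3 - n%:R) / 4)
   * ((k `^ ((n%:R - 3) / 2)) / (2 * (2 * pi) `^ ((n%:R - 1) / 2)))%:C)%C.

Definition source (n : nat) (Om : set 'rV[R]_n) (phi : 'rV[R]_n -> R[i])
  (y : 'rV[R]_n) : R[i] := if `[< Om y >] then phi y else 0.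

Definition farfield (n : nat) (k : R) (Om : set 'rV[R]_n)
    (phi : 'rV[R]_n -> R[i]) (xhat : 'rV[R]_n) : R[i] :=
  Cnk n k * ciint (fun y => expi (- (k * dotv xhat y)) * source Om phi y).

Definition radiationless (n : nat) (k : R) (Om : set 'rV[R]_n)
    (phi : 'rV[R]_n -> R[i]) : Prop :=
  forall xhat : 'rV[R]_n, enorm xhat = 1 -> farfield k Om phi xhat = 0.

End Defs.

(* Main.v *)
Require Import Defs.
From HB Require Import structures.
From mathcomp Require Import all_boot all_order all_algebra.
From mathcomp Require Import all_classical all_reals all_analysis.
From mathcomp Require Import complex.
From mathcomp Require Import ring lra.
Import Order.TTheory GRing.Theory Num.Theory.
Import numFieldNormedType.Exports.
Local Open Scope classical_set_scope.
Local Open Scope ring_scope.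
Section S.
Variable R : realType.
Local Notation mu := (@lebesgue_measure R).

Lemma int_mono d (T : measurableType d) (m : {measure set T -> \bar R}) (f g : T -> \bar R) : (forall x, (0 <= f x <= g x)%E) ->
  (\int[m]_x f x <= \int[m]_x g x)%E.
Proof.
move=> fg.
have f0 x : (0 <= f x)%E by case/andP: (fg x).
have g0 x : (0 <= g x)%E by case/andP: (fg x) => a b; exact: le_trans a b.
rewrite !ge0_integralTE //; apply: ereal_sup_le => _ [h hf <-]; exists h => //= x.
by apply: le_trans (hf x) _; case/andP: (fg x).
Qed.

Lemma Rint_bounds (G : R -> R) (K B c a r : R) : 0 <= B -> 0 <= r -> 0 <= c ->
  (forall t, 0 <= G t <= K) -> (forall t, B < `|t| -> G t = 0) ->
  (forall t, `|t - a| < r -> c <= G t) ->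
  c * (r *+ 2) <= Rintegral mu setT G <= K * (B *+ 2).
Proof.
move=> B0 r0 c0 GK Gs Gl.
have K0 : 0 <= K by case/andP: (GK 0) => a1 b1; exact: le_trans a1 b1.
pose IB : set R := `[-B, B]%classic.
pose II : set R := `]a - r, a + r[%classic.
have mB : measurable IB by exact: measurable_itv.
have mI : measurable II by exact: measurable_itv.
have up : (\int[mu]_x (G x)%:E <= (K * (B *+ 2))%:E)%E.
  have -> : (K * (B *+ 2))%:E = (\int[mu]_(x in IB) (cst K%:E) x)%E.
    have LL : mu IB = (if ((-B)%:E < B%:E)%E then (B%:E - (-B)%:E)%E else 0%E) := lebesgue_measure_itv `[-B, B]. rewrite (integral_cst mu mB) -[X in (_ * X)%E]/(mu IB) LL lte_fin.
        have [BB|] := ltP (-B) B; first by rewrite -EFinD -EFinM opprK mulr2n.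
    move=> h; have -> : B = 0 by lra.
    by rewrite mul0rn mulr0 mule0.
  rewrite [X in (_ <= X)%E]integral_mkcond.
  apply: int_mono => x; rewrite /patch /=.
  case: ifPn => hx.
    by rewrite !lee_fin; exact: GK.
  move: hx; rewrite /IB notin_setE /= in_itv /= -ler_norml => hx.
  have -> : (point : \bar R) = 0%E by []. 
  by rewrite Gs ?lexx // ltNge; apply/negP.
have lo : ((c * (r *+ 2))%:E <= \int[mu]_x (G x)%:E)%E.
  have -> : (c * (r *+ 2))%:E = (\int[mu]_(x in II) (cst c%:E) x)%E.
    have LL : mu II = (if ((a - r)%:E < (a + r)%:E)%E then ((a + r)%:E - (a - r)%:E)%E else 0%E) := lebesgue_measure_itv `]a - r, a + r[.
    rewrite (integral_cst mu mI) -[X in (_ * X)%E]/(mu II) LL lte_fin.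
    have [BB|] := ltP (a - r) (a + r).
      by rewrite -EFinD -EFinM; congr (_%:E); lra.
    move=> h; have -> : r = 0 by lra.
    by rewrite mul0rn mulr0 mule0.
  rewrite [X in (X <= _)%E]integral_mkcond.
  apply: int_mono => x; rewrite /patch /=.
  case: ifPn => hx; last first.
    have -> : (point : \bar R) = 0%E by [].
    by rewrite lexx lee_fin; case/andP: (GK x).
  move: hx; rewrite /II in_setE /= in_itv /= -ltr_distlC => hx.
  by rewrite !lee_fin c0 Gl // distrC.
have G0 : (0 <= \int[mu]_x (G x)%:E)%E.
  by apply: integral_ge0 => x _; rewrite lee_fin; case/andP: (GK x).
rewrite /Rintegral.
have fin : (\int[mu]_(x in setT) (G x)%:E)%E \is a fin_num.
  by rewrite ge0_fin_numE // (le_lt_trans up) // ltry.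
by rewrite -!lee_fin fineK // lo up.
Qed.
End S.
Section S2.
Variable R : realType.

Lemma fine_sub_swap (a b : \bar R) : (0 <= a)%E -> (0 <= b)%E -> fine (b - a)%E = - fine (a - b)%E.
Proof.
case: a => [a||] // ; case: b => [b||] //= _ _; rewrite ?oppr0 //.
by rewrite opprB.
Qed.

Lemma Rintegral_opp d (T : measurableType d) (m : {measure set T -> \bar R}) (G : T -> R) :
  Rintegral m setT (fun t => - G t) = - Rintegral m setT G.
Proof.
rewrite /Rintegral [in LHS]integralE [in RHS]integralE.
have -> : ((fun x => (- G x)%:E)^\+ = (fun x => (G x)%:E)^\-)%E.
  by apply/funext => x; rewrite funeposE funenegE /= ?EFinN ?oppeK.
have -> : ((fun x => (- G x)%:E)^\- = (fun x => (G x)%:E)^\+)%E.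
  by apply/funext => x; rewrite funeposE funenegE /= ?EFinN ?oppeK.
apply: fine_sub_swap; apply: integral_ge0 => x _.
  exact: funepos_ge0.
exact: funeneg_ge0.
Qed.
End S2.
Section S3.
Variable R : realType.

Lemma cons_row0 n (t : R) (v : 'rV[R]_n) : cons_row t v ord0 ord0 = t.
Proof. by rewrite /cons_row mxE unlift_none. Qed.

Lemma cons_rowS n (t : R) (v : 'rV[R]_n) i : cons_row t v ord0 (lift ord0 i) = v ord0 i.
Proof. by rewrite /cons_row mxE liftK. Qed.

Lemma iint_opp n (f : 'rV[R]_n -> R) : iint (fun y => - f y) = - iint f.
Proof.
elim: n f => [|n IH] f //=.
under eq_fun => t do rewrite IH.
exact: Rintegral_opp.
Qed.

Lemma iint_bounds n (f : 'rV[R]_n -> R) (M B c r : R) (p : 'rV[R]_n) :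
  0 <= B -> 0 <= r -> 0 <= c ->
  (forall y : 'rV[R]_n, 0 <= f y <= M) ->
  (forall y : 'rV[R]_n, (exists i, B < `|y ord0 i|) -> f y = 0) ->
  (forall y : 'rV[R]_n, (forall i, `|y ord0 i - p ord0 i| < r) -> c <= f y) ->
  c * (r *+ 2) ^+ n <= iint f <= M * (B *+ 2) ^+ n.
Proof.
elim: n f M B c r p => [|n IH] f M B c r p B0 r0 c0 fM fs fl.
  rewrite /= !expr0 !mulr1; rewrite (proj2 (andP (fM 0))) andbT.
  by apply: fl => -[].
have M0 : 0 <= M by case/andP: (fM 0) => a1 b1; exact: le_trans a1 b1.
rewrite /= !exprS (mulrC (r *+ 2)) (mulrC (B *+ 2)) !mulrA.
apply: Rint_bounds => //.
- by rewrite mulr_ge0 // exprn_ge0 // mulrn_wge0.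
- move=> t; have := IH (fun v => f (cons_row t v)) M B 0 0 0 B0 (lexx 0) (lexx 0).
  rewrite mul0r; apply.
  + by move=> y; exact: fM.
  + by move=> y [i hi]; apply: fs; exists (lift ord0 i); rewrite cons_rowS.
  + by move=> y _; case/andP: (fM (cons_row t y)).
- move=> t Bt.
  have := IH (fun v => f (cons_row t v)) 0 B 0 0 0 B0 (lexx 0) (lexx 0).
  rewrite !mul0r => H.
  have H' : 0 <= iint (fun v => f (cons_row t v)) <= 0.
    apply: H.
    + move=> y; rewrite fs ?lexx //; exists ord0; by rewrite cons_row0.
    + move=> y [i hi]; apply: fs; exists (lift ord0 i); by rewrite cons_rowS.
    + by move=> y _; case/andP: (fM (cons_row t y)).
  by apply/eqP; rewrite eq_le andbC.
- move=> t ht.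
  have := IH (fun v => f (cons_row t v)) M B c r (\row_j p ord0 (lift ord0 j)) B0 r0 c0.
  move=> H.
  have /andP[] // : c * (r *+ 2) ^+ n <= iint (fun v => f (cons_row t v)) <= M * (B *+ 2) ^+ n.
  apply: H.
  + by move=> y; exact: fM.
  + by move=> y [i hi]; apply: fs; exists (lift ord0 i); rewrite cons_rowS.
  + move=> y hy; apply: fl => i; case: (unliftP ord0 i) => [j ->|->].
      by rewrite cons_rowS; have := hy j; rewrite mxE.
    by rewrite cons_row0; exact: ht.
Qed.
End S3.
Section S4.
Variable R : realType.

Lemma lip1 (f df : R -> R) : (forall x : R, is_derive x (1 : R) f (df x)) -> continuous f ->
  (forall x, `|df x| <= 1) -> forall a b, `|f b - f a| <= `|b - a|.
Proof.
move=> fd fc dfb.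
have key a b : a <= b -> `|f b - f a| <= `|b - a|.
  move=> ab; have [c _ ->] := MVT_segment ab (fun x _ => fd x) (continuous_subspaceT fc).
  by rewrite normrM ler_piMl.
move=> a b; case: (leP a b) => ab; first exact: key.
by rewrite distrC (distrC b); apply: key; exact: ltW.
Qed.

Lemma sin_lip (a b : R) : `|sin b - sin a| <= `|b - a|.
Proof. apply: (@lip1 _ cos) => //; [exact: continuous_sin | exact: cos_max]. Qed.

Lemma cos_lip (a b : R) : `|cos b - cos a| <= `|b - a|.
Proof.
apply: (@lip1 _ (fun x => - sin x)) => //; first exact: continuous_cos.
by move=> x; rewrite normrN sin_max.
Qed.

Lemma cabsE (z : R[i]) : cabs z = ComplexField.Normc.normc z.
Proof. by case: z. Qed.

Lemma cabs_ge0 (z : R[i]) : 0 <= cabs z.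
Proof. exact: sqrtr_ge0. Qed.

Lemma cabs_triangle (z w : R[i]) : cabs (z + w) <= cabs z + cabs w.
Proof. by rewrite !cabsE le_normcD. Qed.

Lemma cabsM (z w : R[i]) : cabs (z * w) = cabs z * cabs w.
Proof. by rewrite !cabsE ComplexField.Normc.normcM. Qed.

Lemma cabsN (z : R[i]) : cabs (- z) = cabs z.
Proof. by rewrite !cabsE normcN. Qed.

Lemma cabs_Re (z : R[i]) : `|complex.Re z| <= cabs z.
Proof.
rewrite /cabs -sqrtr_sqr ler_sqrt ?addr_ge0 ?sqr_ge0 //.
by rewrite lerDl sqr_ge0.
Qed.

Lemma cabs_Im (z : R[i]) : `|complex.Im z| <= cabs z.
Proof.
rewrite /cabs -sqrtr_sqr ler_sqrt ?addr_ge0 ?sqr_ge0 //.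
by rewrite lerDr sqr_ge0.
Qed.

Lemma cabs_le_ReIm (z : R[i]) : cabs z <= `|complex.Re z| + `|complex.Im z|.
Proof.
rewrite /cabs -(ger0_norm (addr_ge0 (normr_ge0 (complex.Re z)) (normr_ge0 (complex.Im z)))).
rewrite -sqrtr_sqr ler_sqrt ?sqr_ge0 //.
rewrite -(real_normK (num_real (complex.Re z))) -(real_normK (num_real (complex.Im z))).
have h1 := normr_ge0 (complex.Re z); have h2 := normr_ge0 (complex.Im z).
set a := `|complex.Re z| in h1 *; set b := `|complex.Im z| in h2 *.
nra.
Qed.

Lemma cabs_expi (t : R) : cabs (expi t) = 1.
Proof.
by rewrite /cabs /expi /= !mul0r !mul1r ?mulr0 ?subr0 ?add0r ?addr0 ?subrr ?addr0 cos2Dsin2 sqrtr1.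
Qed.

Lemma cabs_expi_sub (a b : R) : cabs (expi a - expi b) <= `|a - b| *+ 2.
Proof.
apply: (le_trans (cabs_le_ReIm _)); rewrite mulr2n; apply: lerD.
  by rewrite /expi /= !mul0r !mul1r ?mulr0 ?subr0 ?add0r ?addr0; exact: (cos_lip b a).
by rewrite /expi /= !mul0r !mul1r ?mulr0 ?subr0 ?add0r ?addr0; exact: (sin_lip b a).
Qed.
End S4.
Section T.
Variable R : realType.
Variable n : nat.
Lemma ball_coord (x y : 'rV[R]_n) (e : R) : ball x e y -> forall i, `|x ord0 i - y ord0 i| < e.
Proof.
move=> [_ h] i. have := h ord0 i. rewrite /ball /=. done.
Qed.
Lemma coord_ball (x y : 'rV[R]_n) (e : R) : 0 < e -> (forall i, `|x ord0 i - y ord0 i| < e) -> ball x e y.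
Proof.
move=> e0 h; split => // i j. rewrite (ord1 i). exact: h.
Qed.
Lemma open_cube (A : set 'rV[R]_n) x : open A -> A x -> exists2 r : R, 0 < r & forall y : 'rV[R]_n, (forall i, `|y ord0 i - x ord0 i| < r) -> A y.
Proof.
move=> oA Ax. have := oA x Ax. case/nbhs_ballP => e e0 hb. exists e => // y hy; apply: hb; apply: coord_ball => // i. by rewrite distrC hy.
Qed.
Lemma closure_cube (A : set 'rV[R]_n) x : closure A x -> forall r : R, 0 < r -> exists y, A y /\ forall i, `|y ord0 i - x ord0 i| < r.
Proof.
move=> cA r r0. have [y [Ay By]] := cA _ (nbhsx_ballx x r r0). exists y; split => // i. by rewrite distrC; exact: ball_coord By i.
Qed.
End T.
Section S5.
Variable R : realType.

Lemma enorm_ge0 n (v : 'rV[R]_n) : 0 <= enorm v.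
Proof. exact: sqrtr_ge0. Qed.

Lemma coord_le_enorm n (v : 'rV[R]_n) i : `|v ord0 i| <= enorm v.
Proof.
rewrite /enorm /dotv -sqrtr_sqr ler_sqrt; last by rewrite sumr_ge0 // => j _; rewrite -expr2 sqr_ge0.
by rewrite (bigD1 i) //= expr2 lerDl sumr_ge0 // => j _; rewrite -expr2 sqr_ge0.
Qed.

Lemma sum_sq_le n (a : 'I_n -> R) : (forall i, 0 <= a i) ->
  \sum_(i < n) a i * a i <= (\sum_(i < n) a i) ^+ 2 /\ 0 <= \sum_(i < n) a i.
Proof.
move=> a0; apply: (big_rec2 (fun x y => x <= y ^+ 2 /\ 0 <= y)).
  by rewrite expr0n /= lexx.
move=> i x y _ [h1 h2]; have := a0 i; split; [nra | nra].
Qed.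

Lemma enorm_le_l1 n (v : 'rV[R]_n) : enorm v <= \sum_i `|v ord0 i|.
Proof.
have [h1 h2] := @sum_sq_le n (fun i => `|v ord0 i|) (fun i => normr_ge0 _).
rewrite /enorm /dotv -(ger0_norm h2) -sqrtr_sqr ler_sqrt ?sqr_ge0 //.
apply: le_trans h1; rewrite le_eqVlt; apply/orP; left; apply/eqP/eq_bigr => i _.
by rewrite -normrM ger0_norm // -expr2 sqr_ge0.
Qed.

Definition evec n (i0 : 'I_n) : 'rV[R]_n := \row_j (j == i0)%:R.
Arguments evec {n}.

Lemma dotv_evec n (i0 : 'I_n) y : dotv (evec i0) y = y ord0 i0.
Proof.
rewrite /dotv (bigD1 i0) //= big1 ?addr0; first by rewrite mxE eqxx mul1r.
by move=> j /negbTE h; rewrite mxE h mul0r.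
Qed.

Lemma enorm_evec n (i0 : 'I_n) : enorm (evec i0) = 1.
Proof. by rewrite /enorm dotv_evec mxE eqxx sqrtr1. Qed.
End S5.
Section S6.
Variable R : realType.

Lemma enorm0_eq n (v : 'rV[R]_n) : enorm v = 0 -> v = 0.
Proof.
move=> h; apply/matrixP => i j; rewrite (ord1 i) mxE; apply/normr0_eq0.
by apply/eqP; rewrite eq_le normr_ge0 andbT -h coord_le_enorm.
Qed.

Lemma iint_pos n (Om : set 'rV[R]_n) (F : 'rV[R]_n -> R) (M0 K c : R) x0 :
  open Om -> Om x0 -> (forall x, Om x -> enorm x <= M0) -> 0 < c ->
  (forall y, ~ Om y -> F y = 0) -> (forall y, Om y -> c <= F y <= K) ->
  0 < iint F.
Proof.
move=> oOm Ox0 bOm c0 F0 Fb.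
have M00 : 0 <= M0 by apply: le_trans (bOm _ Ox0); exact: enorm_ge0.
have [r r0 hr] := @open_cube R n Om x0 oOm Ox0.
have /andP[h _] : c * (r *+ 2) ^+ n <= iint F <= K * (M0 *+ 2) ^+ n.
  apply: (@iint_bounds R n F K M0 c r x0 M00 (ltW r0) (ltW c0)).
- move=> y; case: (pselect (Om y)) => Oy; last by rewrite F0 // lexx /=; case/andP: (Fb _ Ox0) => a b; exact: le_trans (ltW c0) (le_trans a b).
  by case/andP: (Fb _ Oy) => a ->; rewrite andbT; exact: le_trans (ltW c0) a.
- move=> y [i hi]; apply: F0 => Oy; have := le_trans (@coord_le_enorm R n y i) (bOm _ Oy).
  by rewrite leNgt hi.
- by move=> y hy; case/andP: (Fb _ (hr _ hy)).
apply: lt_le_trans h; apply: mulr_gt0 => //.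
by apply: exprn_gt0; rewrite pmulrn_lgt0.
Qed.
End S6.
Section S7.
Variable R : realType.

Lemma sup_ge0' (E : set R) : (forall x, E x -> 0 <= x) -> 0 <= sup E.
Proof.
move=> E0; case: (pselect (has_sup E)) => hs; last by rewrite sup_out.
have [x Ex] := hs.1; apply: le_trans (E0 _ Ex) _; exact: ub_le_sup hs.2 _ Ex.
Qed.

Lemma sup_le' (E : set R) X : (forall x, E x -> x <= X) -> 0 <= X -> sup E <= X.
Proof.
move=> EX X0; case: (pselect (E !=set0)) => hE; first exact: ge_sup.
have -> : E = set0 by apply/seteqP; split => x // Ex; apply: hE; exists x.
by rewrite sup0.
Qed.

Lemma ReB (a b : R[i]) : complex.Re (a - b) = complex.Re a - complex.Re b.
Proof. by case: a; case: b. Qed.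
Lemma ImB (a b : R[i]) : complex.Im (a - b) = complex.Im a - complex.Im b.
Proof. by case: a; case: b. Qed.

Lemma contra_lemma n (Om : set 'rV[R]_n) (u : 'rV[R]_n -> R) M0 K E x0 :
  open Om -> Om x0 -> (forall x, Om x -> enorm x <= M0) ->
  iint u = 0 -> (forall y, ~ Om y -> u y = 0) -> (forall y, Om y -> `|u y| <= K) ->
  (forall y, Om y -> `|u y - u x0| <= E) -> E < `|u x0| -> False.
Proof.
move=> oOm Ox0 bOm i0 u0 uK uE Eu.
have E0 : 0 <= E by apply: le_trans (uE _ Ox0); rewrite subrr normr0.
case: (leP 0 (u x0)) => hu.
  suff : 0 < iint u by rewrite i0 ltxx.
  apply: (@iint_pos R n Om u M0 K (u x0 - E) x0 oOm Ox0 bOm) => //.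
    by rewrite subr_gt0 -(ger0_norm hu).
  move=> y Oy; have := uE _ Oy; have := uK _ Oy; rewrite ger0_norm // in Eu.
  move=> h1 h2; apply/andP; split.
    by move: h2; rewrite ler_norml; case/andP => a _; lra.
  by move: h1; rewrite ler_norml; case/andP.
suff : 0 < iint (fun y => - u y) by rewrite iint_opp i0 oppr0 ltxx.
apply: (@iint_pos R n Om (fun y => - u y) M0 K (- u x0 - E) x0 oOm Ox0 bOm) => //.
  by rewrite subr_gt0 -(ltr0_norm hu).
  by move=> y Oy; rewrite u0 // oppr0.
move=> y Oy; have := uE _ Oy; have := uK _ Oy; rewrite ltr0_norm // in Eu.
move=> h1 h2; apply/andP; split.
  by move: h2; rewrite ler_norml; case/andP => _ a; lra.
by move: h1; rewrite ler_norml; case/andP => a _; lra.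
Qed.
End S7.
Section S8.
Variable R : realType.

Lemma dist_le_diam n (Om : set 'rV[R]_n) M0 :
  (forall x, Om x -> enorm x <= M0) ->
  forall x y, Om x -> Om y -> enorm (x - y) <= diam Om.
Proof.
move=> bOm x y Ox Oy; apply: ub_le_sup; last by exists x => //; exists y.
exists ((M0 *+ 2) *+ n) => _ [a Oa [b Ob <-]].
apply: le_trans (@enorm_le_l1 R n (a - b)) _.
have H : forall i : 'I_n, `|(a - b) ord0 i| <= M0 *+ 2.
  move=> i; rewrite !mxE.
  apply: le_trans (ler_normD _ _) _; rewrite mulr2n; apply: lerD.
    exact: le_trans (@coord_le_enorm R n a i) (bOm _ Oa).
  by rewrite normrN; exact: le_trans (@coord_le_enorm R n b i) (bOm _ Ob).
apply: le_trans (ler_sum _ (fun i _ => H i)) _.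
by rewrite sumr_const card_ord.
Qed.

Lemma cabs0 : cabs (0 : R[i]) = 0.
Proof. by rewrite /cabs /= expr0n addr0 sqrtr0. Qed.

Lemma Hs_ge0 n alpha (A : set 'rV[R]_n) phi : 0 <= holder_seminorm alpha A phi.
Proof.
apply: sup_ge0' => _ [x [y [_ _ _ ->]]].
by apply: divr_ge0; [exact: cabs_ge0 | exact: powR_ge0].
Qed.

Lemma hol_bound n alpha (Om : set 'rV[R]_n) phi M0 x0 : 0 <= alpha ->
  (forall x, Om x -> enorm x <= M0) -> in_holder alpha (closure Om) phi -> Om x0 ->
  forall y, Om y -> cabs (phi y - phi x0) <= holder_seminorm alpha (closure Om) phi * diam Om `^ alpha.
Proof.
move=> a0 bOm [_ _ hH] Ox0 y Oy.
have Hs0 := @Hs_ge0 n alpha (closure Om) phi.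
have [->|yx] := eqVneq y x0.
  by rewrite subrr cabs0 mulr_ge0 // powR_ge0.
have e0 : 0 < enorm (y - x0).
  rewrite lt_def enorm_ge0 andbT; apply/eqP => /enorm0_eq /eqP.
  by rewrite subr_eq0 (negbTE yx).
have q_le : cabs (phi y - phi x0) / enorm (y - x0) `^ alpha <= holder_seminorm alpha (closure Om) phi.
  rewrite /holder_seminorm; apply: (ub_le_sup hH); exists y, x0; split => //; first exact: subset_closure.
    exact: subset_closure.
  exact/eqP.
have p0 : 0 < enorm (y - x0) `^ alpha by exact: powR_gt0.
rewrite ler_pdivrMr // in q_le; apply: le_trans q_le _.
apply: ler_wpM2l => //; apply: ge0_ler_powR => //; rewrite ?nnegrE ?enorm_ge0 //.
  exact: le_trans (@enorm_ge0 R n (y - x0)) (@dist_le_diam n Om M0 bOm _ _ Oy Ox0).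
exact: (@dist_le_diam n Om M0 bOm _ _ Oy Ox0).
Qed.
End S8.
Section S9.
Variable R : realType.

Lemma expi_neq0 (t : R) : expi t != 0.
Proof. by apply/eqP => h; have := @cabs_expi R t; rewrite h (@cabs0 R) => /eqP; rewrite eq_sym oner_eq0. Qed.

Lemma Cnk_neq0 n (k : R) : 0 < k -> Cnk n k != 0.
Proof.
move=> k0; rewrite /Cnk mulf_neq0 //; first by rewrite oppr_eq0 expi_neq0.
apply/eqP => /(congr1 (@complex.Re R)) /= /eqP; apply/negP; rewrite gt_eqF //.
apply: divr_gt0; first exact: powR_gt0.
by apply: mulr_gt0 => //; apply: powR_gt0; apply: mulr_gt0 => //; exact: pi_gt0.
Qed.

Lemma key_interior n (i0 : 'I_n) (k alpha : R) (Om : set 'rV[R]_n) phi M0 x0 :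
  0 < k -> 0 <= alpha -> open Om -> (forall x, Om x -> enorm x <= M0) ->
  in_holder alpha (closure Om) phi -> radiationless k Om phi ->
  diam Om * k * 16 <= 1 -> Om x0 ->
  cabs (phi x0) <= 8 * (holder_seminorm alpha (closure Om) phi * diam Om `^ alpha).
Proof.
move=> k0 a0 oOm bOm hol rad dk Ox0.
have [hc hK hH] := hol.
set Hs := holder_seminorm alpha (closure Om) phi.
set d := diam Om in dk *.
set P := cabs (phi x0).
set K := sup_abs (closure Om) phi.
have d0 : 0 <= d.
  exact: le_trans (@enorm_ge0 R n (x0 - x0)) (@dist_le_diam R n Om M0 bOm _ _ Ox0 Ox0).
have phiK y : Om y -> cabs (phi y) <= K.
  by move=> Oy; apply: (ub_le_sup hK); exists y => //; exact: subset_closure.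
pose th y := - (k * dotv (@evec R n i0) y).
pose g y := expi (th y) * source Om phi y.
have gO y : Om y -> g y = expi (th y) * phi y.
  by move=> Oy; rewrite /g /source asboolT.
have gN y : ~ Om y -> g y = 0.
  by move=> Oy; rewrite /g /source asboolF // mulr0.
have gK y : Om y -> cabs (g y) <= K.
  by move=> Oy; rewrite gO // cabsM cabs_expi mul1r; exact: phiK.
have gP : cabs (g x0) = P by rewrite gO // cabsM cabs_expi mul1r.
have hd y : Om y -> cabs (g y - g x0) <= Hs * d `^ alpha + (k * d) *+ 2 * P.
  move=> Oy; rewrite !gO //.
  have -> : expi (th y) * phi y - expi (th x0) * phi x0 =
    expi (th y) * (phi y - phi x0) + (expi (th y) - expi (th x0)) * phi x0 by ring.
  apply: le_trans (@cabs_triangle R _ _) _; apply: lerD.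
    rewrite cabsM cabs_expi mul1r; exact: (@hol_bound R n alpha Om phi M0 x0).
  rewrite cabsM; apply: ler_wpM2r; first exact: (@cabs_ge0 R).
  apply: le_trans (@cabs_expi_sub R _ _) _; rewrite !mulr2n.
  have -> : th y - th x0 = k * (x0 - y) ord0 i0 by rewrite /th !dotv_evec !mxE; ring.
  have hh : `|k * (x0 - y) ord0 i0| <= k * d.
    rewrite normrM (gtr0_norm k0); apply: ler_wpM2l; first exact: ltW.
    apply: le_trans (@coord_le_enorm R n _ i0) _.
    exact: (@dist_le_diam R n Om M0 bOm _ _ Ox0 Oy).
  by apply: lerD.
have [ReI ImI] : iint (fun y => complex.Re (g y)) = 0 /\ iint (fun y => complex.Im (g y)) = 0.
  have := rad (@evec R n i0) (@enorm_evec R n i0); rewrite /farfield.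
  move/eqP; rewrite mulf_eq0 (negbTE (@Cnk_neq0 n k k0)) /= => /eqP cz.
  have h1 := congr1 (@complex.Re R) cz; have h2 := congr1 (@complex.Im R) cz.
  move: h1 h2; rewrite /ciint /= !mul0r !mul1r ?subr0 ?addr0 ?add0r => h1 h2.
  by split.
rewrite leNgt; apply/negP => hP.
set E := Hs * d `^ alpha + (k * d) *+ 2 * P.
have P0 : 0 <= P by exact: (@cabs_ge0 R).
have E4 : E < P / 4.
  rewrite /E mulr2n; set a := Hs * d `^ alpha in hP *.
  have : 0 <= (1 - d * k * 16) * P by apply: mulr_ge0 => //; lra.
  nra.
have PRI : P <= `|complex.Re (g x0)| + `|complex.Im (g x0)| by rewrite -gP cabs_le_ReIm.
case: (leP (P / 2) `|complex.Re (g x0)|) => hRe.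
  apply: (@contra_lemma R n Om (fun y => complex.Re (g y)) M0 K E x0 oOm Ox0 bOm ReI).
  - by move=> y Oy; rewrite gN.
  - by move=> y Oy; exact: le_trans (@cabs_Re R _) (gK y Oy).
  - by move=> y Oy; rewrite -ReB; exact: le_trans (@cabs_Re R _) (hd y Oy).
  - lra.
apply: (@contra_lemma R n Om (fun y => complex.Im (g y)) M0 K E x0 oOm Ox0 bOm ImI).
- by move=> y Oy; rewrite gN.
- by move=> y Oy; exact: le_trans (@cabs_Im R _) (gK y Oy).
- by move=> y Oy; rewrite -ImB; exact: le_trans (@cabs_Im R _) (hd y Oy).
- lra.
Qed.
End S9.
Section S10.
Variable R : realType.

Lemma closure_bound n (Om : set 'rV[R]_n) phi alpha X :
  in_holder alpha (closure Om) phi -> (forall x, Om x -> cabs (phi x) <= X) ->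
  forall x, closure Om x -> cabs (phi x) <= X.
Proof.
move=> [hc _ _] hX x cx; apply/ler_addgt0Pr => e e0.
have [dl dl0 hdl] := hc x cx e e0.
have n10 : 0 < n%:R + 1 :> R by rewrite ltr_wpDl // ler0n.
pose rho := dl / (n%:R + 1).
have rho0 : 0 < rho by rewrite divr_gt0.
have [z [Oz hz]] := @closure_cube R n Om x cx rho rho0.
have ez : enorm (z - x) < dl.
  apply: le_lt_trans (@enorm_le_l1 R n (z - x)) _.
  have H : forall i : 'I_n, `|(z - x) ord0 i| <= rho.
    by move=> i; rewrite !mxE; exact: ltW.
  apply: le_lt_trans (ler_sum _ (fun i _ => H i)) _.
  rewrite sumr_const card_ord -mulr_natr.
  have : rho * (n%:R + 1) = dl by rewrite /rho divfK // gt_eqF.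
  have : 0 <= n%:R :> R by rewrite ler0n.
  nra.
have := hdl z (subset_closure Oz) ez => hze.
have t := @cabs_triangle R (phi z) (- (phi z - phi x)).
have E : phi z + - (phi z - phi x) = phi x by ring.
rewrite E cabsN in t; apply: le_trans t _; apply: lerD; first exact: hX.
exact: ltW.
Qed.
End S10.

Theorem corollary2p2 (R : realType) (n : nat) (k Rm : R) :
  (2 <= n)%N -> 0 < k -> 0 < Rm ->
  exists C : R, 0 < C /\
    forall (alpha : R) (Om : set 'rV[R]_n) (phi : 'rV[R]_n -> R[i]),
      0 <= alpha <= 1 ->
      bounded_lipschitz_domain Om ->
      diam Om <= Rm ->
      connected (~` Om) ->
      in_holder alpha (closure Om) phi ->
      radiationless k Om phi ->
      C * (sup_abs (closure Om `\` Om) phi / holder_norm alpha (closure Om) phi)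
        <= diam Om `^ alpha.
Proof.
move=> hn k0 _.
have n0 : (0 < n)%N by apply: leq_trans hn.
pose i0 : 'I_n := Ordinal n0.
have k16 : 0 < 16 * k by rewrite mulr_gt0.
exists (Num.min (1 / 8) (1 / (16 * k))).
split; first by rewrite lt_min !divr_gt0.
move=> alpha Om phi /andP[a0 a1] [oOm _ [x1 Ox1] [M0 bOm] _] _ _ hol rad.
have C8 : Num.min (1 / 8) (1 / (16 * k)) <= 1 / 8 :> R by rewrite ge_min lexx.
have Ck : Num.min (1 / 8) (1 / (16 * k)) <= 1 / (16 * k) :> R by rewrite ge_min lexx orbT.
have C0 : 0 <= Num.min (1 / 8) (1 / (16 * k)) :> R by rewrite le_min !divr_ge0 // ltW.
set C := Num.min (1 / 8) (1 / (16 * k)) in C8 Ck C0 *.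
have [hc hK hH] := hol.
set Hs := holder_seminorm alpha (closure Om) phi.
set K := sup_abs (closure Om) phi.
set S := sup_abs (closure Om `\` Om) phi.
set d := diam Om.
have Hs0 : 0 <= Hs by exact: Hs_ge0.
have phiK x : closure Om x -> cabs (phi x) <= K.
  by move=> cx; apply: (ub_le_sup hK); exists x.
have K0 : 0 <= K by apply: le_trans (@cabs_ge0 R _) (phiK _ (subset_closure Ox1)).
have d0 : 0 <= d.
  exact: le_trans (@enorm_ge0 R n (x1 - x1)) (@dist_le_diam R n Om M0 bOm _ _ Ox1 Ox1).
have dp0 : 0 <= d `^ alpha by exact: powR_ge0.
have SX X : 0 <= X -> (forall x, closure Om x -> cabs (phi x) <= X) -> S <= X.
  move=> X0 hX; apply: sup_le' => // _ [x [cx _] <-]; exact: hX.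
rewrite /holder_norm -/K -/Hs.
have [N0|Npos] := eqVneq (K + Hs) 0.
  by rewrite N0 invr0 mulr0 mulr0.
have Ngt0 : 0 < K + Hs by rewrite lt_def Npos addr_ge0.
case: (leP (d * k * 16) 1) => dk.
  have SB : S <= 8 * (Hs * d `^ alpha).
    apply: SX; first by rewrite mulr_ge0 // mulr_ge0.
    apply: (@closure_bound R n Om phi alpha) => // x Ox.
    exact: (@key_interior R n i0 k alpha Om phi M0 x k0 a0 oOm bOm hol rad dk Ox).
  have q : S / (K + Hs) <= 8 * d `^ alpha.
    rewrite ler_pdivrMr //; apply: le_trans SB _; nra.
  have q0 : 0 <= S / (K + Hs).
    by rewrite divr_ge0 ?(ltW Ngt0) //; apply: sup_ge0' => _ [x _ <-]; exact: cabs_ge0.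
  nra.
have SK : S <= K by apply: SX.
have q : S / (K + Hs) <= 1.
  by rewrite ler_pdivrMr // mul1r; apply: le_trans SK _; rewrite lerDl.
have q0 : 0 <= S / (K + Hs).
  by rewrite divr_ge0 ?(ltW Ngt0) //; apply: sup_ge0' => _ [x _ <-]; exact: cabs_ge0.
have Cd : C <= d `^ alpha.
  case: (leP 1 d) => d1.
    apply: le_trans C8 _; apply: le_trans (_ : 1 <= d `^ alpha).
      by rewrite ler_pdivrMr // mul1r ler1n.
    by rewrite -(powRr0 d); apply: ler_powR.
  have dpos : 0 < d by nra.
  apply: le_trans Ck _; apply: (@le_trans _ _ d).
    by rewrite ler_pdivrMr //; lra.
  by rewrite -{1}(powRr1 (ltW dpos)); apply: ger_powR => //; rewrite dpos ltW.
nra.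
Qed.
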